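(* Suppose that $G$ is a finite group, $x\in G$ has prime order, and $\mathrm{Sub}_G(x)$ is a proper core-free subgroup of $G$. Then for every proper subgroup $H$ of $G$ with $\mathrm{Sub}_G(x)\le H$, $x$ is quasi-semiregular in the action of $G$ on the right cosets $[G:H]$.
   Context: For $x\in G$, the subnormaliser is $\mathrm{Sub}_G(x)=\langle g\in G : \langle x\rangle \text{ is subnormal in } \langle x,g\rangle\rangle$. A subgroup is core-free if it contains no nontrivial normal subgroup of $G$. A permutation $g$ is quasi-semiregular if $\langle g\rangle$ has a unique fixed point and acts semiregularly (only the identity fixes a point) on the remaining points. *)

(* Defs.v *)
From mathcomp Require Import all_boot all_fingroup all_solvable.
Set Implicit Arguments. Unset Strict Implicit. Unset Printing Implicit Defensive.
Local Open Scope group_scope.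

Definition subnormaliser (gT : finGroupType) (G : {set gT}) (x : gT) : {set gT} :=
  <<[set g in G | <[x]> <|<| (<[x]> <*> <[g]>)]>>.

Definition core_free (gT : finGroupType) (H G : {set gT}) : Prop :=
  forall N : {group gT}, N <| G -> N \subset H -> N :=: 1.

Definition quasi_semiregular_on_cosets (gT : finGroupType) (G H : {set gT})
    (x : gT) : Prop :=
  exists a : {set gT},
    'Fix_(rcosets H G | 'Rs)(<[x]>) = [set a] /\
    (forall b, b \in rcosets H G -> b != a -> 'C_(<[x]>)[b | 'Rs] = 1).

(* Main.v *)
Require Import Defs.
From mathcomp Require Import all_boot all_fingroup all_solvable.
Local Open Scope group_scope.

Lemma N_sub (gT : finGroupType) (G Q : {group gT}) (x : gT) (p : nat) :
  x \in Q -> p.-group Q -> 'N_G(Q) \subset subnormaliser G x.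
Proof.
move=> xQ pQ; apply/subsetP => n /setIP [nG nQ].
rewrite /subnormaliser; apply: mem_gen; rewrite inE nG /=.
have snN : <[x]> <|<| 'N(Q).
  apply: subnormal_trans (normal_subnormal (normalG Q)).
  by apply: nilpotent_subnormal (pgroup_nil pQ) _; rewrite cycle_subG.
have xN : x \in 'N(Q) by apply: (subsetP (normG Q)).
have sub : <[x]> <*> <[n]> \subset 'N(Q) by rewrite join_subG !cycle_subG xN nQ.
have := setI_subnormal sub snN.
by rewrite (setIidPl (joing_subl _ _)).
Qed.

Lemma key (gT : finGroupType) (G H : {group gT}) (x g : gT) :
  x \in G -> prime #[x] -> subnormaliser G x \subset H -> H \subset G ->
  g \in G -> x ^ g^-1 \in H -> g \in H.
Proof.
move=> xG prx sSH sHG gG yH.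
set p := #[x].
set A := [set g in G | <[x]> <|<| (<[x]> <*> <[g]>)].
have eS : subnormaliser G x = <<A>> by [].
rewrite eS in sSH.
have sSG : <<A>> \subset G by rewrite gen_subG; apply/subsetP => u; rewrite inE => /andP[].
have pX : p.-group <[x]> by rewrite /pgroup -orderE pnat_id.
have sxG : <[x]> \subset G by rewrite cycle_subG.
have [P sylP xP] := Sylow_superset sxG pX.
have pP := pHall_pgroup sylP.
have xP' : x \in P by rewrite -cycle_subG.
have sPG := pHall_sub sylP.
have PS : forall Q : {group gT}, x \in Q -> Q \subset G -> p.-group Q -> Q \subset <<A>>.
  move=> Q xQ sQG pQ; rewrite -eS; apply: (subset_trans _ (@N_sub _ G Q x p xQ pQ)).
  by rewrite subsetI sQG normG.
have sPS : P \subset <<A>> by apply: PS => //; rewrite -cycle_subG.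
have sylPH : p.-Sylow(H) P := pHall_subl (subset_trans sPS sSH) sHG sylP.
have sylPS : p.-Sylow(<<A>>) P := pHall_subl sPS sSG sylP.
have pY : p.-group <[x ^ g^-1]> by rewrite /pgroup -orderE orderJ pnat_id.
have syH : <[x ^ g^-1]> \subset H by rewrite cycle_subG.
have [h hH yPh] := Sylow_subJ sylPH syH pY.
have hG : h \in G := subsetP sHG h hH.
set m := h * g.
have mG : m \in G by rewrite groupM.
have xPm : x \in P :^ m.
  rewrite conjsgM -(conjgKV g x) memJ_conjg; exact: (subsetP yPh) (cycle_id _).
have sPmG : P :^ m \subset G by rewrite conj_subG.
have sylPm : p.-Sylow(G) (P :^ m) by rewrite pHallJ.
have sPmS : P :^ m \subset <<A>> by apply: PS => //; exact: pHall_pgroup sylPm.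
have sylPmS : p.-Sylow(<<A>>) (P :^ m) := pHall_subl sPmS sSG sylPm.
have [s sS ePs] := Sylow_trans sylPS sylPmS.
have sG : s \in G := subsetP sSG s sS.
have nP : m * s^-1 \in 'N_G(P).
  rewrite inE groupM ?groupV //=; apply/normP.
  by rewrite conjsgM ePs -conjsgM mulgV conjsg1.
have mS : m \in <<A>>.
  have := subsetP (@N_sub _ G P x p xP' pP) _ nP; rewrite eS => ms.
  by rewrite -(mulgKV s m) groupM.
have mH := subsetP sSH m mS.
by rewrite -(mulKg h g) groupM ?groupV.
Qed.

Theorem corollary3p4 (gT : finGroupType) (G : {group gT}) (x : gT) :
  x \in G -> prime #[x] ->
  subnormaliser G x \proper G -> core_free (subnormaliser G x) G ->
  forall H : {group gT}, H \proper G -> subnormaliser G x \subset H ->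
    quasi_semiregular_on_cosets G H x.
Proof.
move=> xG prx _ _ H /andP[sHG _] sSH.
have xS : x \in subnormaliser G x.
  have pX : #[x].-group <[x]> by rewrite /pgroup -orderE pnat_id.
  apply: (subsetP (@N_sub _ G _ x _ (cycle_id x) pX)).
  by rewrite inE xG; apply: (subsetP (normG _)); apply: cycle_id.
have xH := subsetP sSH x xS.
have eF : 'Fix_(rcosets H G | 'Rs)(<[x]>) = [set (H : {set gT})].
  apply/setP => b; rewrite !inE.
  apply/andP/eqP.
    case=> /rcosetsP [g gG ->] fx.
    have := subsetP fx x (cycle_id x); rewrite inE => /eqP; rewrite /= rcosetE -rcosetM => e.
    have : g * x \in H :* g by rewrite -e rcoset_refl.
    rewrite mem_rcoset => yH.
    rewrite rcoset_id //; apply: (@key _ G H x g xG prx sSH sHG gG).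
    by rewrite conjgE invgK mulgA.
  move=> ->; split; first by apply/rcosetsP; exists 1; rewrite ?group1 ?mulg1.
  apply/subsetP => a ax; rewrite inE /= rcosetE rcoset_id //.
  by move: a ax; apply/subsetP; rewrite cycle_subG.
exists (H : {set gT}); split=> // b bR nbH.
apply: prime_TIg; first by rewrite -orderE.
rewrite sub_astab1; apply: contra nbH => bF.
have : b \in 'Fix_(rcosets H G | 'Rs)(<[x]>) by rewrite inE bR.
by rewrite eF inE.
Qed.
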